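(* Let $n,k$ be integers with $1\le k\le n-3$, let $F$ be a finite field with $|F|\ge 2n$, let $\{\lambda_{i,j}: i\in[n],\ j\in\{0,1\}\}$ be $2n$ distinct elements of $F$, and let $\mathcal{C}$ be the set of all $C=(C_1,\dots,C_n)$, $C_i=(c_{i,b,a}: b\in\{1,2,3\},\ a\in\{0,\dots,2^n-1\})$, satisfying $\sum_{i=1}^n \lambda_{i,a_i}^t c_{i,b,a}=0$ for all $t\in\{0,\dots,n-k-1\}$, $b\in\{1,2,3\}$, $a\in\{0,\dots,2^n-1\}$. Let $\mathcal{R}\subseteq[n]\setminus\{1,2\}$ with $|\mathcal{R}|=k+1$. Then for every $C\in\mathcal{C}$: (1) the values $\{c_{1,b,a}: a\in\{0,\dots,2^n-1\},\ b\in\{1,2\}\}\cup\{c_{2,1,a}+c_{2,2,a(1,a_1\oplus 1)}: a\in\{0,\dots,2^n-1\}\}$ are uniquely determined by the values $\{c_{i,1,a}+c_{i,2,a(1,a_1\oplus 1)}: a\in\{0,\dots,2^n-1\},\ i\in\mathcal{R}\}$; (2) the values $\{c_{2,b,a}: a\in\{0,\dots,2^n-1\},\ b\in\{1,3\}\}\cup\{c_{1,1,a}+c_{1,3,a(2,a_2\oplus 1)}: a\in\{0,\dots,2^n-1\}\}$ are uniquely determined by the values $\{c_{i,1,a}+c_{i,3,a(2,a_2\oplus 1)}: a\in\{0,\dots,2^n-1\},\ i\in\mathcal{R}\}$. (Here ''uniquely determined'' means: any two codewords of $\mathcal{C}$ that agree on the latter values agree on the former values.)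
   Context: $[n]=\{1,\dots,n\}$. For $a\in\{0,\dots,2^n-1\}$, $(a_1,\dots,a_n)\in\{0,1\}^n$ denotes its $n$-digit binary expansion, and $a$ is identified with this tuple. For $i\in[n]$, $u\in\{0,1\}$, $a(i,u)$ denotes the element obtained from $a$ by replacing the $i$th digit $a_i$ by $u$; $\oplus$ denotes addition modulo 2. *)

(* Defs.v *)
From mathcomp Require Import all_boot all_algebra.
Set Implicit Arguments. Unset Strict Implicit. Unset Printing Implicit Defensive.
Import GRing.Theory.
Local Open Scope ring_scope.

(* Indices: node i in [n] is represented by i : 'I_n (node i+1 <-> ordinal i);
   b in {1,2,3} by b : 'I_3 (b <-> ordinal b-1);
   a in {0,...,2^n-1} is identified with its binary expansion (a_1,...,a_n),
   represented as a : {ffun 'I_n -> bool} (digit a_{i+1} = a i). *)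
Definition word n := {ffun 'I_n -> bool}.

Definition setdig n (a : word n) (i : 'I_n) (u : bool) : word n :=
  [ffun j => if j == i then u else a j].

Definition flipdig n (a : word n) (i : 'I_n) : word n := setdig a i (~~ a i).

Definition codeword (F : Type) n := 'I_n -> 'I_3 -> word n -> F.

Definition in_code (F : fieldType) n k (lam : 'I_n -> bool -> F)
  (c : codeword F n) : Prop :=
  forall (t : nat) (b : 'I_3) (a : word n), (t < n - k)%N ->
    \sum_(i < n) (lam i (a i)) ^+ t * c i b a = 0.

(* Main.v *)
Require Import Defs.
From mathcomp Require Import all_boot all_algebra.
From mathcomp Require Import zify.
Import GRing.Theory.
Local Open Scope ring_scope.

Lemma big_opt (R : Type) (idx : R) (op : Monoid.com_law idx) (T : finType) (f : option T -> R) :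
  \big[op/idx]_(j : option T) f j = op (f None) (\big[op/idx]_(i : T) f (Some i)).
Proof.
rewrite (bigD1 None) //=; congr (op _ _).
rewrite (reindex_omap Some id) //=; last by case.
by apply: eq_bigl => i; rewrite eqxx.
Qed.

Lemma vand (F : fieldType) (I : finType) (P : pred I) (p x : I -> F) (N : nat) :
  injective p -> (#|P| <= N)%N -> (forall j, ~~ P j -> x j = 0) ->
  (forall t, (t < N)%N -> \sum_j p j ^+ t * x j = 0) -> forall j, x j = 0.
Proof.
move=> pinj hP hx hs j0.
case: (boolP (P j0)) => Pj0; last exact: hx.
have hq : forall q : {poly F}, (size q <= N)%N -> \sum_j q.[p j] * x j = 0.
  move=> q hq.
  under eq_bigr => j _ do rewrite horner_coef mulr_suml.
  rewrite exchange_big /= big1 // => i _.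
  under eq_bigr => j _ do rewrite -mulrA.
  by rewrite -mulr_sumr hs ?mulr0 // (leq_trans (ltn_ord i) hq).
pose P' := [pred l | (l != j0) && P l].
pose q := \prod_(l | P' l) ('X - (p l)%:P).
have hsz : (size q <= N)%N.
  rewrite size_prod; last by move=> i _; rewrite polyXsubC_eq0.
  under eq_bigr => i _ do rewrite size_XsubC.
  rewrite sum_nat_const.
  have : (#|P'| < #|P|)%N.
    by rewrite (cardD1 j0) [j0 \in P]Pj0 add1n ltnS; apply: subset_leq_card; apply/subsetP => l; rewrite !inE.
  rewrite (_ : (#|_| * _ = #|P'| * 2)%N) //. move=> h. rewrite (_ : forall m, ((m * 2).+1 - m = m.+1)%N); last by move=> m; lia. exact: leq_trans h hP.
have := hq q hsz.
rewrite (bigD1 j0) //= big1 ?addr0.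
- move=> /eqP; rewrite mulf_eq0 => /orP[|/eqP //].
  rewrite horner_prod => /prodf_neq0 /= H; exfalso; apply: H => l /andP[hl _].
  by rewrite hornerXsubC subr_eq0; apply/eqP => /pinj E; rewrite E eqxx in hl.
- move=> j hj; case Pj: (P j); last by rewrite hx ?Pj // mulr0.
  by rewrite horner_prod (bigD1 j) /= ?hj ?Pj // hornerXsubC subrr !mul0r.
Qed.

Lemma flipK n (a : word n) u : flipdig (flipdig a u) u = a.
Proof.
apply/ffunP => j; rewrite !ffunE; case: (eqVneq j u) => [->|] //.
by rewrite eqxx negbK.
Qed.

Lemma key (F : fieldType) n k (lam : 'I_n -> bool -> F)
  (hlam : forall i j i' j', lam i j = lam i' j' -> i = i' /\ j = j')
  (R : {set 'I_n}) (hRcard : #|R| = k.+1) (u : 'I_n) (hu : u \notin R)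
  (b b' : 'I_3) (d : codeword F n) (hd : in_code k lam d)
  (H : forall i a, i \in R -> d i b a + d i b' (flipdig a u) = 0) (a : word n) :
  d u b a = 0 /\ d u b' (flipdig a u) = 0 /\
  (forall i, i != u -> d i b a + d i b' (flipdig a u) = 0).
Proof.
set a' := flipdig a u.
pose p (j : option 'I_n) := match j with None => lam u (~~ a u) | Some i => lam i (a i) end.
pose x (j : option 'I_n) := match j with None => d u b' a'
   | Some i => if i == u then d u b a else d i b a + d i b' a' end.
pose P (j : option 'I_n) := match j with None => true | Some i => i \notin R end.
have hv := @vand F _ P p x (n - k) _ _ _ _.
have {hv} hv : forall j, x j = 0.
  apply: hv.
  - move=> [i|] [j|] //= /hlam [E1 E2]; subst; try done; by move: E2; case: (a _).
  - rewrite -sum1_card big_mkcond big_opt /= -big_mkcond sum1_card.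
    have -> : #|[pred i | i \notin R]| = #|~: R| by apply: eq_card => i; rewrite !inE.
    have := cardsC R; rewrite card_ord hRcard; lia.
  - move=> [i|] //=; rewrite negbK => iR.
    have -> : (i == u) = false by apply/eqP => E; rewrite -E iR in hu.
    exact: H.
  - move=> t ht; have h1 := hd t b a ht; have h2 := hd t b' a' ht.
    rewrite big_opt /=.
    apply: (@eq_trans _ _ (\sum_i lam i (a i) ^+ t * d i b a + \sum_i lam i (a' i) ^+ t * d i b' a')); last by rewrite h1 h2 addr0.
    rewrite (bigD1 u) //= eqxx [in RHS](bigD1 u) //= [X in _ = _ + X](bigD1 u) //=.
    have -> : a' u = ~~ a u by rewrite /a' /flipdig /setdig ffunE eqxx.
    rewrite (eq_bigr (fun i => lam i (a i) ^+ t * d i b a + lam i (a i) ^+ t * d i b' a')); last first.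
      by move=> i /negbTE hi; rewrite hi mulrDr.
    rewrite [X in _ = _ + (_ + X)](eq_bigr (fun i => lam i (a i) ^+ t * d i b' a')); last first.
      by move=> i /negbTE hi; rewrite /a' /flipdig /setdig ffunE hi.
    rewrite big_split /=.
    set A := \sum_(i < n | _) _; set B := \sum_(i < n | _) _.
    rewrite !addrA; congr (_ + _).
    by rewrite [RHS]addrC addrA.
split; first by have := hv (Some u); rewrite /= eqxx.
split; first exact: (hv None).
by move=> i /negbTE hi; have := hv (Some i); rewrite /= hi.
Qed.
Theorem mainTheorem3 (F : finFieldType) (n k : nat)
  (hk1 : (1 <= k)%N) (hkn : (k <= n - 3)%N)
  (h4 : (4 <= n)%N) (* implied by hk1, hkn; used to name nodes 1 and 2 *) (hF : (2 * n <= #|F|)%N)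
  (lam : 'I_n -> bool -> F)
  (hlam : forall i j i' j', lam i j = lam i' j' -> i = i' /\ j = j')
  (R : {set 'I_n})
  (hR : forall i, i \in R -> (2 <= val i)%N)
  (hRcard : #|R| = k.+1) :
  let b1 : 'I_3 := @Ordinal 3 0 isT in
  let b2 : 'I_3 := @Ordinal 3 1 isT in
  let b3 : 'I_3 := @Ordinal 3 2 isT in
  let node1 : 'I_n := Ordinal (leq_trans (isT : (1 <= 4)%N) h4) in
  let node2 : 'I_n := Ordinal (leq_trans (isT : (2 <= 4)%N) h4) in
  forall c c' : codeword F n, in_code k lam c -> in_code k lam c' ->
  ((forall i a, i \in R ->
      c i b1 a + c i b2 (flipdig a node1) = c' i b1 a + c' i b2 (flipdig a node1)) ->
   (forall a, c node1 b1 a = c' node1 b1 a /\ c node1 b2 a = c' node1 b2 a) /\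
   (forall a, c node2 b1 a + c node2 b2 (flipdig a node1)
            = c' node2 b1 a + c' node2 b2 (flipdig a node1))) /\
  ((forall i a, i \in R ->
      c i b1 a + c i b3 (flipdig a node2) = c' i b1 a + c' i b3 (flipdig a node2)) ->
   (forall a, c node2 b1 a = c' node2 b1 a /\ c node2 b3 a = c' node2 b3 a) /\
   (forall a, c node1 b1 a + c node1 b3 (flipdig a node2)
            = c' node1 b1 a + c' node1 b3 (flipdig a node2))).
Proof.
move=> b1 b2 b3 node1 node2 c c' hc hc'.
pose d : codeword F n := fun i b a => c i b a - c' i b a.
have hd : in_code k lam d.
  move=> t b a ht; rewrite /d.
  under eq_bigr do rewrite mulrBr.
  by rewrite sumrB hc // hc' // subrr.
have n1R : node1 \notin R by apply/negP => /hR.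
have n2R : node2 \notin R by apply/negP => /hR.
have n12 : node2 != node1 by [].
have n21 : node1 != node2 by [].
have E0 : forall x y : F, x - y = 0 -> x = y by move=> x y /eqP; rewrite subr_eq0 => /eqP.
have E2 : forall x y x' y' : F, (x - x') + (y - y') = 0 -> x + y = x' + y'.
  by move=> x y x' y'; rewrite addrACA -opprD => /E0.
have HP : forall (u v : 'I_n) (bb : 'I_3), u \notin R -> v != u ->
   (forall i a, i \in R -> c i b1 a + c i bb (flipdig a u) = c' i b1 a + c' i bb (flipdig a u)) ->
   (forall a, c u b1 a = c' u b1 a /\ c u bb a = c' u bb a) /\
   (forall a, c v b1 a + c v bb (flipdig a u) = c' v b1 a + c' v bb (flipdig a u)).
  move=> u v bb uR vu H.
  have H' : forall i a, i \in R -> d i b1 a + d i bb (flipdig a u) = 0.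
    by move=> i a iR; rewrite /d addrACA -opprD H // subrr.
  split.
    move=> a; split.
      by apply: E0; case: (@key _ _ _ _ hlam _ hRcard _ uR _ _ _ hd H' a).
    apply: E0; case: (@key _ _ _ _ hlam _ hRcard _ uR _ _ _ hd H' (flipdig a u)) => _ [+ _].
    by rewrite flipK.
  by move=> a; apply: E2; case: (@key _ _ _ _ hlam _ hRcard _ uR _ _ _ hd H' a) => _ [_ ->].
split; [exact: HP | exact: HP].
Qed.
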